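(* Let $(M,d)$ be a pointed metric space and let $\mu\in ba(\widetilde M)$ be positive. The following are equivalent: (i) $\|\Phi^*\mu\|=\|\mu\|$. (ii) For every $\gamma\in(0,1)$ there exist $A\subseteq\widetilde M$ and $f\in B_{\mathrm{Lip}_0(M)}$ with $\mu(A)\ge\gamma\mu(\widetilde M)$ and $f(m_{x,y})\ge\gamma$ for all $(x,y)\in A$. (iii) For every $\gamma\in(0,1)$ there exists a $\gamma$-cyclically monotonic $A\subseteq\widetilde M$ with $\mu(A)\ge\gamma\mu(\widetilde M)$.
   Context: $(M,d)$ is a metric space with base point $0$; $\mathrm{Lip}_0(M)$ is the real Banach space of Lipschitz $f\colon M\to\mathbb R$ with $f(0)=0$, normed by the best Lipschitz constant, with closed unit ball $B_{\mathrm{Lip}_0(M)}$. $\widetilde M=\{(x,y)\in M\times M:x\ne y\}$ and $f(m_{x,y})=(f(x)-f(y))/d(x,y)$. $ba(\widetilde M)$ is the Banach space of bounded finitely additive signed measures on the power set of $\widetilde M$ with norm $|\mu|(\widetilde M)$. $\Phi\colon\mathrm{Lip}_0(M)\to\ell_\infty(\widetilde M)$, $\Phi f(x,y)=(f(x)-f(y))/d(x,y)$, and $(\Phi^*\mu)(f)=\int_{\widetilde M}\Phi f\,d\mu$. For $\gamma\in(0,1]$, $A\subseteq\widetilde M$ is $\gamma$-cyclically monotonic if for every finite sequence $(x_1,y_1),\dots,(x_n,y_n)\in A$, with $y_{n+1}=y_1$, $\sum_{i=1}^n\min\{d(x_i,y_{i+1})-\gamma d(x_i,y_i),\,d(y_i,y_{i+1})\}\ge0$.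 *)

(* Defs.v *)
From Stdlib Require Import Reals List.
From Coquelicot Require Import Coquelicot.
Open Scope R_scope.

Definition is_metric {M : Type} (d : M -> M -> R) : Prop :=
  (forall x y, 0 <= d x y) /\
  (forall x y, d x y = 0 <-> x = y) /\
  (forall x y, d x y = d y x) /\
  (forall x y z, d x z <= d x y + d y z).

Definition Mtilde (M : Type) : Type := { p : M * M | fst p <> snd p }.
Definition mt_x {M} (p : Mtilde M) : M := fst (proj1_sig p).
Definition mt_y {M} (p : Mtilde M) : M := snd (proj1_sig p).

(* f(m_{x,y}) = (f x - f y)/d(x,y), i.e. (Phi f)(x,y) *)
Definition Phi {M : Type} (d : M -> M -> R) (f : M -> R) (p : Mtilde M) : R :=
  (f (mt_x p) - f (mt_y p)) / d (mt_x p) (mt_y p).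

Definition in_Lip0_ball {M : Type} (d : M -> M -> R) (x0 : M) (f : M -> R) : Prop :=
  f x0 = 0 /\ forall x y, Rabs (f x - f y) <= d x y.

(* positive element of ba(\widetilde M): nonnegative finitely additive set
   function on the power set of \widetilde M (boundedness then follows). *)
Definition positive_ba {T : Type} (mu : (T -> Prop) -> R) : Prop :=
  (forall A, 0 <= mu A) /\
  (forall A B, (forall t, A t -> B t -> False) ->
      mu (fun t => A t \/ B t) = mu A + mu B).

Definition setT_ {T : Type} : T -> Prop := fun _ => True.

(* finite partitions of T with a constant on each block: a simple function
   below g; the lower sum is sum_i c_i mu(A_i) *)
Definition is_partition {T : Type} (P : list (T -> Prop)) : Prop :=
  (forall t, exists A, In A P /\ A t) /\
  (forall i j t, (i < length P)%nat -> (j < length P)%nat -> i <> j ->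
      nth i P (fun _ => False) t -> nth j P (fun _ => False) t -> False).

Definition lower_sums {T : Type} (mu : (T -> Prop) -> R) (g : T -> R) : R -> Prop :=
  fun r => exists (P : list ((T -> Prop) * R)),
    is_partition (map fst P) /\
    (forall A c t, In (A, c) P -> A t -> c <= g t) /\
    r = fold_right Rplus 0 (map (fun Ac => snd Ac * mu (fst Ac)) P).

(* integral of a bounded function against a positive finitely additive measure
   on the power set (every set measurable): supremum of lower simple sums *)
Definition ba_integral {T : Type} (mu : (T -> Prop) -> R) (g : T -> R) : R :=
  real (Lub_Rbar (lower_sums mu g)).

Definition Phi_star_norm {M : Type} (d : M -> M -> R) (x0 : M)
  (mu : (Mtilde M -> Prop) -> R) : Rbar :=
  Lub_Rbar (fun r => exists f, in_Lip0_ball d x0 f /\ r = Rabs (ba_integral mu (Phi d f))).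

Definition cyc_sum {M : Type} (d : M -> M -> R) (gamma : R) (l : list (Mtilde M)) : R :=
  match l with
  | nil => 0
  | p0 :: _ =>
    let n := length l in
    fold_right Rplus 0 (map (fun i =>
      let xi := mt_x (nth i l p0) in
      let yi := mt_y (nth i l p0) in
      let yj := mt_y (nth (S i mod n) l p0) in
      Rmin (d xi yj - gamma * d xi yi) (d yi yj)) (seq 0 n))
  end.

Definition cyclically_monotonic {M : Type} (d : M -> M -> R) (gamma : R)
  (A : Mtilde M -> Prop) : Prop :=
  forall l : list (Mtilde M), (forall p, In p l -> A p) -> 0 <= cyc_sum d gamma l.

(* Main.v *)
Require Import Defs.
From Stdlib Require Import Reals List.
From Coquelicot Require Import Coquelicot.
From Stdlib Require Import FunctionalExtensionality PropExtensionality Classical Lra Lia.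
Open Scope R_scope.


Lemma sup_facts (E : R -> Prop) (r0 B : R) : E r0 -> (forall r, E r -> r <= B) ->
  Lub_Rbar E = Finite (real (Lub_Rbar E)) /\ (forall r, E r -> r <= real (Lub_Rbar E)) /\
  (forall b, (forall r, E r -> r <= b) -> real (Lub_Rbar E) <= b).
Proof.
  intros H0 HB.
  destruct (Lub_Rbar_correct E) as [Hub Hlub].
  set (l := Lub_Rbar E) in *.
  assert (H1 : Rbar_le (Finite r0) l) by (apply Hub; auto).
  assert (H2 : Rbar_le l (Finite B)) by (apply Hlub; intros x Hx; apply HB; auto).
  destruct l as [l| |]; simpl in *; try contradiction.
  split; [reflexivity| split].
  - intros r Hr. exact (Hub r Hr).
  - intros b Hb. exact (Hlub (Finite b) Hb).
Qed.

Lemma mu_ext {T} (mu : (T->Prop)->R) (A B : T -> Prop) :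
  (forall t, A t <-> B t) -> mu A = mu B.
Proof.
  intros H. f_equal. apply functional_extensionality; intro t;
  apply propositional_extensionality; auto.
Qed.

Lemma mu_empty {T} (mu : (T->Prop)->R) : positive_ba mu -> mu (fun _ => False) = 0.
Proof.
  intros [H0 Hadd].
  assert (H := Hadd (fun _ => False) (fun _ => False) (fun t a b => a)).
  cbv beta in H. rewrite (mu_ext mu (fun t => False \/ False) (fun _ => False)) in H by tauto.
  lra.
Qed.

Lemma mu_empty' {T} (mu : (T->Prop)->R) (A : T -> Prop) : positive_ba mu ->
  (forall t, ~ A t) -> mu A = 0.
Proof.
  intros Hmu H. rewrite (mu_ext mu A (fun _ => False)) by firstorder.
  apply mu_empty; auto.
Qed.

Lemma mu_split {T} (mu : (T->Prop)->R) (B S : T -> Prop) : positive_ba mu ->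
  mu B = mu (fun t => B t /\ S t) + mu (fun t => B t /\ ~ S t).
Proof.
  intros [H0 Hadd].
  rewrite <- Hadd by tauto.
  apply mu_ext. intro t. destruct (classic (S t)); tauto.
Qed.

Lemma mu_compl {T} (mu : (T->Prop)->R) (S : T -> Prop) : positive_ba mu ->
  mu S + mu (fun t => ~ S t) = mu setT_.
Proof.
  intros Hmu. rewrite (mu_split mu setT_ S Hmu).
  f_equal; apply mu_ext; unfold setT_; tauto.
Qed.

Fixpoint pw_disj {T} (Q : list (T -> Prop)) : Prop :=
  match Q with
  | nil => True
  | B :: Q' => (forall t, B t -> forall C, In C Q' -> C t -> False) /\ pw_disj Q'
  end.

Lemma part_disj {T} (Q : list (T->Prop)) :
  (forall i j t, (i < length Q)%nat -> (j < length Q)%nat -> i <> j ->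
      nth i Q (fun _ => False) t -> nth j Q (fun _ => False) t -> False) -> pw_disj Q.
Proof.
  induction Q as [|B Q IH]; simpl; auto. intros H. split.
  - intros t Bt C HC Ct.
    destruct (In_nth Q C (fun _ => False) HC) as [j [Hj HCj]].
    apply (H 0%nat (S j) t); simpl; try lia; auto. rewrite HCj; auto.
  - apply IH. intros i j t Hi Hj Hij Hit Hjt.
    apply (H (S i) (S j) t); simpl; auto; lia.
Qed.

Definition UP {T} (P : list ((T -> Prop) * R)) (t : T) : Prop :=
  exists A, In A (map fst P) /\ A t.

Lemma cmu_le {T} (mu : (T->Prop)->R) (g : T -> R) (B : T -> Prop) (c a : R) : positive_ba mu ->
  (forall t, B t -> c <= g t) -> (forall t, B t -> g t <= a) -> c * mu B <= a * mu B.
Proof.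
  intros Hmu Hc Ha. destruct (classic (exists t, B t)) as [[t Bt]|Hn].
  - apply Rmult_le_compat_r. apply (proj1 Hmu). specialize (Hc t Bt); specialize (Ha t Bt); lra.
  - rewrite (mu_empty' mu B Hmu) by firstorder. lra.
Qed.

Lemma lower_le_aux {T} (mu : (T->Prop)->R) (Hmu : positive_ba mu) (g : T -> R)
  (S : T->Prop) a b : forall (P : list ((T->Prop)*R)),
  (forall t, S t -> g t <= a) -> (forall t, ~ S t -> g t <= b) ->
  pw_disj (map fst P) -> (forall A c t, In (A,c) P -> A t -> c <= g t) ->
  fold_right Rplus 0 (map (fun Ac => snd Ac * mu (fst Ac)) P) <=
    a * mu (fun t => S t /\ UP P t) + b * mu (fun t => ~ S t /\ UP P t).
Proof.
  induction P as [|[B c] P IH]; intros Ha Hb Hd Hc; simpl.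
  - rewrite (mu_empty' mu (fun t => S t /\ UP nil t)) by (unfold UP; simpl; firstorder).
    rewrite (mu_empty' mu (fun t => ~ S t /\ UP nil t)) by (unfold UP; simpl; firstorder).
    lra.
  - simpl in Hd. destruct Hd as [Hd1 Hd2].
    assert (E1 : mu (fun t => S t /\ UP ((B, c) :: P) t) =
                 mu (fun t => B t /\ S t) + mu (fun t => S t /\ UP P t)).
    { rewrite <- (proj2 Hmu).
      - apply mu_ext. intro t. unfold UP; simpl. firstorder. subst; auto.
      - intros t [Bt St] [_ [C [HC Ct]]]. eapply Hd1; eauto. }
    assert (E2 : mu (fun t => ~ S t /\ UP ((B, c) :: P) t) =
                 mu (fun t => B t /\ ~ S t) + mu (fun t => ~ S t /\ UP P t)).
    { rewrite <- (proj2 Hmu).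
      - apply mu_ext. intro t. unfold UP; simpl. firstorder. subst; auto.
      - intros t [Bt St] [_ [C [HC Ct]]]. eapply Hd1; eauto. }
    rewrite E1, E2.
    rewrite (mu_split mu B S Hmu).
    assert (IH' := IH Ha Hb Hd2 (fun A c0 t H => Hc A c0 t (or_intror H))).
    assert (K1 : c * mu (fun t => B t /\ S t) <= a * mu (fun t => B t /\ S t)).
    { apply (cmu_le mu g); auto.
      - intros t [Bt _]. apply (Hc B c t); simpl; auto.
      - intros t [_ St]. auto. }
    assert (K2 : c * mu (fun t => B t /\ ~ S t) <= b * mu (fun t => B t /\ ~ S t)).
    { apply (cmu_le mu g); auto.
      - intros t [Bt _]. apply (Hc B c t); simpl; auto.
      - intros t [_ St]. auto. }
    lra.
Qed.

Lemma lower_le {T} (mu : (T->Prop)->R) (Hmu : positive_ba mu) (g : T -> R)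
  (S : T->Prop) a b r :
  (forall t, S t -> g t <= a) -> (forall t, ~ S t -> g t <= b) ->
  lower_sums mu g r -> r <= a * mu S + b * mu (fun t => ~ S t).
Proof.
  intros Ha Hb [P [[Hcov Hdis] [Hc ->]]].
  rewrite (mu_ext mu S (fun t => S t /\ UP P t)) by (intro t; unfold UP; firstorder).
  rewrite (mu_ext mu (fun t => ~ S t) (fun t => ~ S t /\ UP P t)) by (intro t; unfold UP; firstorder).
  apply (lower_le_aux mu Hmu g); auto. apply part_disj; auto.
Qed.

Lemma lower_two {T} (mu : (T->Prop)->R) (g : T -> R) (S : T->Prop) a b :
  (forall t, S t -> a <= g t) -> (forall t, ~ S t -> b <= g t) ->
  lower_sums mu g (a * mu S + b * mu (fun t => ~ S t)).
Proof.
  intros Ha Hb. exists ((S, a) :: ((fun t => ~ S t), b) :: nil). split; [|split].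
  - split.
    + intro t. destruct (classic (S t)).
      * exists S; simpl; auto.
      * exists (fun t => ~ S t); simpl; auto.
    + intros i j t Hi Hj Hij. simpl in Hi, Hj.
      destruct i as [|[|i]]; destruct j as [|[|j]]; simpl; try lia; tauto.
  - intros A c t [H|[H|[]]]; inversion H; subst; auto.
  - simpl. ring.
Qed.

Lemma integral_facts {T} (mu : (T->Prop)->R) (Hmu : positive_ba mu) (g : T -> R) r0 :
  lower_sums mu g r0 -> (forall t, g t <= 1) ->
  (forall r, lower_sums mu g r -> r <= ba_integral mu g) /\
  (forall b, (forall r, lower_sums mu g r -> r <= b) -> ba_integral mu g <= b).
Proof.
  intros H0 H1.
  destruct (sup_facts (lower_sums mu g) r0 (mu setT_) H0) as [_ [A B]].
  - intros r Hr. assert (K := lower_le mu Hmu g setT_ 1 0 r (fun t _ => H1 t)).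
    rewrite (mu_empty' mu (fun t => ~ setT_ t)) in K by (unfold setT_; tauto).
    assert (r <= 1 * mu setT_ + 0 * 0) by (apply K; auto; unfold setT_; tauto). lra.
  - unfold ba_integral; auto.
Qed.



Lemma dpos {M} (d : M -> M -> R) : is_metric d -> forall p : Mtilde M, 0 < d (mt_x p) (mt_y p).
Proof.
  intros [H0 [H1 _]] [[x y] H]. unfold mt_x, mt_y; simpl in *.
  destruct (Rle_lt_or_eq_dec _ _ (H0 x y)) as [h|h]; auto.
  exfalso. apply H. apply H1. auto.
Qed.

Lemma Phi_bounds {M} (d : M -> M -> R) x0 f (p : Mtilde M) : is_metric d -> in_Lip0_ball d x0 f ->
  -1 <= Phi d f p <= 1.
Proof.
  intros Hd [_ Hf]. assert (D := dpos d Hd p). unfold Phi.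
  set (D0 := d (mt_x p) (mt_y p)) in *.
  assert (K := Hf (mt_x p) (mt_y p)). fold D0 in K. apply Rabs_le_between in K.
  split.
  - apply Rle_div_r; lra.
  - unfold Rdiv. apply (Rmult_le_reg_r D0); auto. rewrite Rmult_assoc, Rinv_l; lra.
Qed.

Lemma Phi_ge {M} (d : M -> M -> R) f (p : Mtilde M) g : is_metric d ->
  Phi d f p >= g -> f (mt_x p) - f (mt_y p) >= g * d (mt_x p) (mt_y p).
Proof.
  intros Hd H. assert (D := dpos d Hd p). unfold Phi in H.
  apply Rle_ge. apply Rle_div_r; lra.
Qed.

Lemma ge_Phi {M} (d : M -> M -> R) f (p : Mtilde M) g : is_metric d ->
  f (mt_x p) - f (mt_y p) >= g * d (mt_x p) (mt_y p) -> Phi d f p >= g.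
Proof.
  intros Hd H. assert (D := dpos d Hd p). unfold Phi.
  apply Rle_ge. apply Rle_div_r; lra.
Qed.

Lemma ball_neg {M} (d : M -> M -> R) x0 f : in_Lip0_ball d x0 f -> in_Lip0_ball d x0 (fun x => - f x).
Proof.
  intros [H0 H]. split. rewrite H0; ring. intros x y.
  replace (- f x - - f y) with (- (f x - f y)) by ring. rewrite Rabs_Ropp; auto.
Qed.

Lemma ball_zero {M} (d : M -> M -> R) x0 : is_metric d -> in_Lip0_ball d x0 (fun _ => 0).
Proof.
  intros Hd. split; auto. intros x y. replace (0-0) with 0 by ring. rewrite Rabs_R0.
  apply (proj1 Hd).
Qed.

Lemma int_facts {M} (d : M -> M -> R) x0 (mu : (Mtilde M -> Prop) -> R) f :
  is_metric d -> positive_ba mu -> in_Lip0_ball d x0 f ->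
  (forall r, lower_sums mu (Phi d f) r -> r <= ba_integral mu (Phi d f)) /\
  (forall b, (forall r, lower_sums mu (Phi d f) r -> r <= b) -> ba_integral mu (Phi d f) <= b).
Proof.
  intros Hd Hmu Hf.
  apply (integral_facts mu Hmu _ (-1 * mu setT_ + 0 * mu (fun t => ~ setT_ t))).
  - apply lower_two. intros; apply (Phi_bounds d x0); auto. unfold setT_; tauto.
  - intros; apply (Phi_bounds d x0); auto.
Qed.

Lemma i_to_ii {M} (d : M -> M -> R) x0 (mu : (Mtilde M -> Prop) -> R) :
  is_metric d -> positive_ba mu ->
  Phi_star_norm d x0 mu = Finite (mu setT_) ->
   (forall gamma, 0 < gamma < 1 ->
      exists (A : Mtilde M -> Prop) (f : M -> R),
        in_Lip0_ball d x0 f /\ mu A >= gamma * mu setT_ /\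
        (forall p, A p -> Phi d f p >= gamma)).
Proof.
  intros Hd Hmu HN g Hg.
  set (m := mu setT_) in *.
  assert (Hm : 0 <= m) by apply (proj1 Hmu).
  destruct (Rle_lt_or_eq_dec _ _ Hm) as [Hm'|Hm'].
  2:{ exists (fun _ => False), (fun _ => 0). split; [apply ball_zero; auto|split].
      rewrite mu_empty by auto. rewrite <- Hm'. lra. tauto. }
  set (eps := (1-g)^2).
  assert (Heps : 0 < eps) by (unfold eps; nra).
  assert (Hex : exists f, in_Lip0_ball d x0 f /\ Rabs (ba_integral mu (Phi d f)) > (1-eps)*m).
  { apply NNPP. intro Hn.
    destruct (Lub_Rbar_correct (fun r => exists f, in_Lip0_ball d x0 f /\ r = Rabs (ba_integral mu (Phi d f)))) as [_ Hl].
    assert (K : Rbar_le (Phi_star_norm d x0 mu) (Finite ((1-eps)*m))).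
    { apply Hl. intros x [f [Hf ->]]. simpl. apply Rnot_lt_le. intro Hc. apply Hn. exists f; split; auto. }
    rewrite HN in K. simpl in K. fold m in K. nra. }
  destruct Hex as [f [Hf HI]].
  destruct (int_facts d x0 mu f Hd Hmu Hf) as [Ilow Iup].
  set (I := ba_integral mu (Phi d f)) in *.
  destruct (Rle_or_lt 0 I) as [HI0|HI0].
  - rewrite Rabs_pos_eq in HI by auto.
    exists (fun p => Phi d f p >= g), f. split; auto. split; [|auto].
    assert (K : I <= 1 * mu (fun p => Phi d f p >= g) + g * mu (fun t => ~ (Phi d f t >= g))).
    { apply Iup. intros r Hr. apply (lower_le mu Hmu (Phi d f)); auto.
      intros; apply (Phi_bounds d x0); auto. intros t Ht. lra. }
    assert (C := mu_compl mu (fun p => Phi d f p >= g) Hmu). fold m in C.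
    set (a := mu (fun p => Phi d f p >= g)) in *.
    unfold eps in *. apply Rle_ge. nra.
  - rewrite Rabs_left in HI by auto.
    exists (fun p => Phi d f p <= - g), (fun x => - f x). split; [apply ball_neg; auto|split].
    + assert (K : -1 * mu (fun p => Phi d f p <= -g) + (-g) * mu (fun t => ~ (Phi d f t <= -g)) <= I).
      { apply Ilow. apply lower_two. intros; apply (Phi_bounds d x0); auto. intros t Ht. lra. }
      assert (C := mu_compl mu (fun p => Phi d f p <= -g) Hmu). fold m in C.
      set (a := mu (fun p => Phi d f p <= -g)) in *.
      unfold eps in *. apply Rle_ge. nra.
    + intros p Hp. unfold Phi in *. 
      replace ((- f (mt_x p) - - f (mt_y p)) / d (mt_x p) (mt_y p)) with
        (- ((f (mt_x p) - f (mt_y p)) / d (mt_x p) (mt_y p))) by (unfold Rdiv; ring).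
      lra.
Qed.

Lemma ii_to_i {M} (d : M -> M -> R) x0 (mu : (Mtilde M -> Prop) -> R) :
  is_metric d -> positive_ba mu ->
   (forall gamma, 0 < gamma < 1 ->
      exists (A : Mtilde M -> Prop) (f : M -> R),
        in_Lip0_ball d x0 f /\ mu A >= gamma * mu setT_ /\
        (forall p, A p -> Phi d f p >= gamma)) ->
  Phi_star_norm d x0 mu = Finite (mu setT_).
Proof.
  intros Hd Hmu H.
  set (m := mu setT_) in *.
  set (E := fun r => exists f, in_Lip0_ball d x0 f /\ r = Rabs (ba_integral mu (Phi d f))).
  assert (UB : forall r, E r -> r <= m).
  { intros r [f [Hf ->]]. destruct (int_facts d x0 mu f Hd Hmu Hf) as [Ilow Iup].
    apply Rabs_le_between. split.
    + assert (K : -1 * m + 0 * mu (fun t => ~ setT_ t) <= ba_integral mu (Phi d f)).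
      { apply Ilow. apply lower_two. intros; apply (Phi_bounds d x0); auto. unfold setT_; tauto. }
      rewrite (mu_empty' mu (fun t => ~ setT_ t)) in K by (unfold setT_; tauto). lra.
    + apply Iup. intros r Hr.
      assert (K : r <= 1 * m + 0 * mu (fun t => ~ setT_ t)).
      { apply (lower_le mu Hmu (Phi d f)); auto. intros; apply (Phi_bounds d x0); auto. unfold setT_; tauto. }
      rewrite (mu_empty' mu (fun t => ~ setT_ t)) in K by (unfold setT_; tauto). lra. }
  assert (E0 : E (Rabs (ba_integral mu (Phi d (fun _ => 0))))).
  { exists (fun _ => 0). split; auto. apply ball_zero; auto. }
  destruct (sup_facts E _ m E0 UB) as [Hs [Hub Hlub]].
  unfold Phi_star_norm. fold E. rewrite Hs. f_equal.
  set (s := real (Lub_Rbar E)) in *.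
  assert (Hs0 : 0 <= s) by (eapply Rle_trans; [apply Rabs_pos| apply Hub; exact E0]).
  apply Rle_antisym.
  - apply Hlub. auto.
  - apply Rnot_lt_le. intro Hlt.
    set (eta := (m - s) / (6 * m)).
    assert (Heta : eta * m = (m - s) / 6) by (unfold eta; field; lra).
    assert (Heta0 : 0 < eta) by (unfold eta; apply Rdiv_lt_0_compat; lra).
    assert (Heta1 : eta <= 1/6).
    { unfold eta. apply Rle_div_l; lra. }
    destruct (H (1 - eta) ltac:(lra)) as [A [f [Hf [HA HP]]]].
    destruct (int_facts d x0 mu f Hd Hmu Hf) as [Ilow Iup].
    assert (K : (1 - eta) * mu A + (-1) * mu (fun t => ~ A t) <= ba_integral mu (Phi d f)).
    { apply Ilow. apply lower_two. intros; apply Rge_le; auto.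
      intros; apply (Phi_bounds d x0); auto. }
    assert (C := mu_compl mu A Hmu). fold m in C.
    assert (K2 : Rabs (ba_integral mu (Phi d f)) <= s) by (apply Hub; exists f; auto).
    assert (K3 := Rle_abs (ba_integral mu (Phi d f))).
    assert (K4 : 0 <= mu A) by apply (proj1 Hmu).
    nra.
Qed.



Definition cc {M} (d : M -> M -> R) (g : R) (p q : Mtilde M) : R :=
  Rmin (d (mt_x p) (mt_y q) - g * d (mt_x p) (mt_y p)) (d (mt_y p) (mt_y q)).

Fixpoint chain {M} (d : M -> M -> R) (g : R) (p : Mtilde M) (r : list (Mtilde M)) : R :=
  match r with
  | nil => 0
  | q :: r' => cc d g p q + chain d g q r'
  end.

Fixpoint lastp {A} (p : A) (r : list A) : A :=
  match r with nil => p | q :: r' => lastp q r' end.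

Lemma cyc_sum_eq {M} (d : M -> M -> R) g p0 r :
  cyc_sum d g (p0 :: r) = fold_right Rplus 0 (map (fun i => cc d g (nth i (p0::r) p0)
     (nth (S i mod S (length r)) (p0::r) p0)) (seq 0 (S (length r)))).
Proof. reflexivity. Qed.

Lemma sum_app (l1 l2 : list R) :
  fold_right Rplus 0 (l1 ++ l2) = fold_right Rplus 0 l1 + fold_right Rplus 0 l2.
Proof. induction l1; simpl; lra. Qed.

Lemma chain_nth {M} (d : M -> M -> R) g (p0 : Mtilde M) : forall r p,
  fold_right Rplus 0 (map (fun i => cc d g (nth i (p::r) p0) (nth (S i) (p::r) p0))
     (seq 0 (length r))) = chain d g p r.
Proof.
  induction r as [|q r IH]; intros p; [reflexivity|].
  simpl length. simpl. rewrite <- seq_shift, map_map. f_equal.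
  rewrite <- (IH q). reflexivity.
Qed.

Lemma nth_last {A} (dflt : A) : forall r p, nth (length r) (p :: r) dflt = lastp p r.
Proof. induction r as [|q r IH]; intros p; [reflexivity|]. simpl length. simpl. apply IH. Qed.

Lemma bridge {M} (d : M -> M -> R) g p0 r :
  cyc_sum d g (p0 :: r) = chain d g p0 r + cc d g (lastp p0 r) p0.
Proof.
  rewrite cyc_sum_eq. rewrite seq_S, map_app, sum_app. cbn [map fold_right Nat.add].
  rewrite Nat.Div0.mod_same. rewrite nth_last. cbn [nth].
  rewrite <- (chain_nth d g p0 r p0). f_equal; [|simpl; ring].
  f_equal. apply map_ext_in. intros i Hi. apply in_seq in Hi.
  rewrite Nat.mod_small by lia. reflexivity.
Qed.

Lemma chain_app {M} (d : M -> M -> R) g q : forall r p,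
  chain d g p (r ++ q :: nil) = chain d g p r + cc d g (lastp p r) q.
Proof. induction r as [|a r IH]; intros p; simpl; [ring|]. rewrite IH. ring. Qed.

Lemma lastp_app {A} (q : A) : forall r p, lastp p (r ++ q :: nil) = q.
Proof. induction r; simpl; auto. Qed.



Lemma lastp_in {A} : forall (r : list A) p, lastp p r = p \/ In (lastp p r) r.
Proof.
  induction r as [|q r IH]; intros p; simpl; auto.
  destruct (IH q) as [H|H]; rewrite ?H; auto.
Qed.

Lemma ii_to_iii_g {M} (d : M -> M -> R) x0 g (A : Mtilde M -> Prop) f :
  is_metric d -> in_Lip0_ball d x0 f -> (forall p, A p -> Phi d f p >= g) ->
  cyclically_monotonic d g A.
Proof.
  intros Hd [_ Hf] HA.
  assert (Hcc : forall p q, A p -> cc d g p q >= f (mt_y p) - f (mt_y q)).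
  { intros p q Hp. assert (K := Phi_ge d f p g Hd (HA p Hp)).
    assert (K1 := Hf (mt_x p) (mt_y q)). assert (K2 := Hf (mt_y p) (mt_y q)).
    apply Rabs_le_between in K1. apply Rabs_le_between in K2.
    unfold cc. apply Rle_ge. apply Rmin_glb; lra. }
  assert (Hch : forall r p, A p -> (forall q, In q r -> A q) ->
            chain d g p r >= f (mt_y p) - f (mt_y (lastp p r))).
  { induction r as [|q r IH]; intros p Hp Hr; simpl.
    - lra.
    - assert (K1 := Hcc p q Hp). assert (K2 := IH q (Hr q (or_introl eq_refl))
        (fun q' H => Hr q' (or_intror H))). lra. }
  intros l Hl. destruct l as [|p0 r].
  - simpl. lra.
  - rewrite bridge.
    assert (K1 := Hch r p0 (Hl p0 (or_introl eq_refl)) (fun q H => Hl q (or_intror H))).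
    assert (Hlast : A (lastp p0 r)).
    { destruct (lastp_in r p0) as [H|H]; rewrite ?H; apply Hl; simpl; auto. }
    assert (K2 := Hcc _ p0 Hlast). lra.
Qed.

Lemma Rmin_shift a b a' b' e : a' <= a + e -> b' <= b + e -> Rmin a' b' <= Rmin a b + e.
Proof. intros. unfold Rmin. destruct (Rle_dec a' b'), (Rle_dec a b); lra. Qed.

Lemma iii_to_ii_g {M} (d : M -> M -> R) x0 g (A : Mtilde M -> Prop) :
  is_metric d -> 0 < g < 1 -> cyclically_monotonic d g A ->
  exists f, in_Lip0_ball d x0 f /\ (forall p, A p -> Phi d f p >= g).
Proof.
  intros Hd Hg HA.
  destruct (classic (exists p0, A p0)) as [[p0 Hp0]|Hn].
  2:{ exists (fun _ => 0). split. apply ball_zero; auto. intros p Hp; exfalso; eauto. }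
  destruct Hd as [Dpos [Dz [Dsym Dtri]]].
  assert (Hd : is_metric d) by (repeat split; auto; apply Dz).
  set (e := fun (p : Mtilde M) z => Rmin (d (mt_x p) z - g * d (mt_x p) (mt_y p)) (d (mt_y p) z)).
  set (term := fun r z => - chain d g p0 r - e (lastp p0 r) z).
  set (E := fun z v => exists r, (forall q, In q r -> A q) /\ v = term r z).
  assert (Bd : forall z r, (forall q, In q r -> A q) -> term r z <= d z (mt_y p0)).
  { intros z r Hr. assert (K := HA (p0 :: r)).
    rewrite bridge in K.
    assert (K' : 0 <= chain d g p0 r + cc d g (lastp p0 r) p0).
    { apply K. intros p [H|H]; [subst; auto| auto]. }
    set (p := lastp p0 r) in *.
    assert (cc d g p p0 <= e p z + d z (mt_y p0)).
    { unfold cc, e. apply Rmin_shift.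
      - assert (T := Dtri (mt_x p) z (mt_y p0)). lra.
      - assert (T := Dtri (mt_y p) z (mt_y p0)). lra. }
    unfold term. fold p. lra. }
  assert (SF : forall z, (forall r, E z r -> r <= real (Lub_Rbar (E z))) /\
     (forall b, (forall r, E z r -> r <= b) -> real (Lub_Rbar (E z)) <= b)).
  { intros z. destruct (sup_facts (E z) (term nil z) (d z (mt_y p0))) as [_ H].
    - exists nil. split; simpl; tauto.
    - intros r [l [Hl ->]]. auto.
    - exact H. }
  set (F := fun z => real (Lub_Rbar (E z))).
  assert (Lip : forall z w, F z <= F w + d z w).
  { intros z w. apply (proj2 (SF z)). intros v [r [Hr ->]].
    assert (K : term r w <= F w) by (apply (proj1 (SF w)); exists r; auto).
    assert (K2 : e (lastp p0 r) w <= e (lastp p0 r) z + d z w).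
    { unfold e. apply Rmin_shift.
      - assert (T := Dtri (mt_x (lastp p0 r)) z w). lra.
      - assert (T := Dtri (mt_y (lastp p0 r)) z w). lra. }
    unfold term in *. lra. }
  exists (fun z => F z - F x0). split.
  - split. ring. intros x y. apply Rabs_le_between.
    assert (K1 := Lip x y). assert (K2 := Lip y x). rewrite Dsym in K2. lra.
  - intros q Hq. apply (ge_Phi d); auto.
    assert (Dq := dpos d Hd q).
    assert (Key : F (mt_y q) <= F (mt_x q) - g * d (mt_x q) (mt_y q)).
    { apply (proj2 (SF (mt_y q))). intros v [r [Hr ->]].
      assert (K : term (r ++ q :: nil) (mt_x q) <= F (mt_x q)).
      { apply (proj1 (SF (mt_x q))). exists (r ++ q :: nil). split; auto.
        intros q' H. apply in_app_or in H. destruct H as [H|[H|[]]]; subst; auto. }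
      assert (Eq : term (r ++ q :: nil) (mt_x q) = term r (mt_y q) + g * d (mt_x q) (mt_y q)).
      { unfold term. rewrite chain_app, lastp_app.
        assert (Ex : e q (mt_x q) = - (g * d (mt_x q) (mt_y q))).
        { unfold e. assert (Dxx : d (mt_x q) (mt_x q) = 0) by (apply Dz; reflexivity). rewrite Dxx. rewrite Rmin_left. ring.
          assert (0 <= d (mt_y q) (mt_x q)) by auto. nra. }
        rewrite Ex. unfold cc, e. ring. }
      lra. }
    apply Rle_ge. lra.
Qed.


Theorem corollary2p6 (M : Type) (d : M -> M -> R) (x0 : M)
  (mu : (Mtilde M -> Prop) -> R) :
  is_metric d -> positive_ba mu ->
  ((Phi_star_norm d x0 mu = Finite (mu setT_)) <->
   (forall gamma, 0 < gamma < 1 ->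
      exists (A : Mtilde M -> Prop) (f : M -> R),
        in_Lip0_ball d x0 f /\ mu A >= gamma * mu setT_ /\
        (forall p, A p -> Phi d f p >= gamma))) /\
  ((Phi_star_norm d x0 mu = Finite (mu setT_)) <->
   (forall gamma, 0 < gamma < 1 ->
      exists A : Mtilde M -> Prop,
        cyclically_monotonic d gamma A /\ mu A >= gamma * mu setT_)).
Proof.
  intros Hd Hmu.
  assert (E12 : (Phi_star_norm d x0 mu = Finite (mu setT_)) <->
   (forall gamma, 0 < gamma < 1 ->
      exists (A : Mtilde M -> Prop) (f : M -> R),
        in_Lip0_ball d x0 f /\ mu A >= gamma * mu setT_ /\
        (forall p, A p -> Phi d f p >= gamma))).
  { split; [apply i_to_ii | apply ii_to_i]; auto. }
  split; auto. split.
  - intros H g Hg. destruct (proj1 E12 H g Hg) as [A [f [Hf [HA HP]]]].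
    exists A; split; auto. eapply ii_to_iii_g; eauto.
  - intros H. apply E12. intros g Hg. destruct (H g Hg) as [A [HA Hm]].
    destruct (iii_to_ii_g d x0 g A Hd Hg HA) as [f [Hf HP]]. exists A, f; auto.
Qed.
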